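(* For all types $A$, $B$, $C$: if $A \simeq B$ and $B \equiv C$, then $A \simeq C$.
   Context: Types and rows share one grammar: $A,B,C,\rho ::= X \mid \alpha \mid \star \mid \iota \mid A\to B \mid \forall X{:}K.\,A \mid [\rho] \mid \langle\rho\rangle \mid \cdot \mid \ell{:}A;\rho$, where $X$ ranges over type variables (bound by $\forall$), $\alpha$ over type names, $\star$ is the dynamic type (also serving as the dynamic row), $\iota$ over base types, $[\rho]$ and $\langle\rho\rangle$ are record and variant types, $\cdot$ is the empty row, $\ell$ ranges over labels, and $K\in\{\mathsf T,\mathsf R\}$ is a kind. Types are identified up to renaming of bound variables; $\mathit{ftv}(A)$ is the set of free type variables. Row matching $\rho \triangleright_\ell A,\rho'$ is defined by: $(\ell{:}A;\rho)\triangleright_\ell A,\rho$; if $\ell'\neq\ell$ and $\rho\triangleright_\ell A,\rho'$ then $(\ell'{:}B;\rho)\triangleright_\ell A,(\ell'{:}B;\rho')$; and $\star\triangleright_\ell \star,\star$. $\mathbf{QPoly}(A)$ holds iff $A$ is not of the form $\forall X{:}K.\,B$ and $\star$ occurs in $A$. Row concatenation $\rho_1\odot\rho_2$ is defined only when $\rho_1=\ell_1{:}A_1;\dots;\ell_n{:}A_n;\cdot$, and then equals $\ell_1{:}A_1;\dots;\ell_n{:}A_n;\rho_2$. $\mathit{dom}(\rho)$ is the set of labels in the top-level label prefix of $\rho$. A row $\rho$ ends with $\star$ if $\rho=\rho'\odot\star$ for some $\rho'$. Type equivalence $\equiv$ is the least equivalence relation that is a congruence for $\to$, $\forall X{:}K.\,-$,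 $[-]$, $\langle-\rangle$ and $\ell{:}-;-$, and contains $\ell{:}A;\ell'{:}B;\rho \equiv \ell'{:}B;\ell{:}A;\rho$ whenever $\ell\neq\ell'$. Consistency $\simeq$ is defined inductively: $A\simeq A$; $\star\simeq A$; $A\simeq\star$; $A_1\to A_2\simeq B_1\to B_2$ if $A_1\simeq B_1$ and $A_2\simeq B_2$; $\forall X{:}K.A\simeq\forall X{:}K.B$ if $A\simeq B$; $\forall X{:}K.A\simeq B$ if $\mathbf{QPoly}(B)$, $X\notin\mathit{ftv}(B)$ and $A\simeq B$; $A\simeq\forall X{:}K.B$ if $\mathbf{QPoly}(A)$, $X\notin\mathit{ftv}(A)$ and $A\simeq B$; $[\rho_1]\simeq[\rho_2]$ and $\langle\rho_1\rangle\simeq\langle\rho_2\rangle$ if $\rho_1\simeq\rho_2$; $\ell{:}A;\rho_1\simeq B$ if $B\triangleright_\ell B',\rho_2$, $A\simeq B'$ and $\rho_1\simeq\rho_2$; $A\simeq \ell{:}B;\rho_2$ if $A\triangleright_\ell A',\rho_1$, $A'\simeq B$ and $\rho_1\simeq\rho_2$. *)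

(* Defs.v *)
(* Gradual row-polymorphic types in locally nameless /
   de Bruijn style: bound type variables X are de Bruijn indices, so
   types are identified up to alpha-renaming by construction. *)
From Stdlib Require Import Arith.

Inductive kind : Type := KT | KR.

Inductive ty : Type :=
  | TVar  : nat -> ty
  | TName : nat -> ty
  | TDyn  : ty                   (* dynamic type / dynamic row  ★ *)
  | TBase : nat -> ty
  | TArr  : ty -> ty -> ty
  | TAll  : kind -> ty -> ty     (* forall X:K. A  (binds index 0) *)
  | TRec  : ty -> ty
  | TVnt  : ty -> ty
  | TNil  : ty
  | TCons : nat -> ty -> ty -> ty.

Fixpoint shift (c : nat) (A : ty) : ty :=
  match A with
  | TVar k => if k <? c then TVar k else TVar (S k)
  | TName a => TName a
  | TDyn => TDyn
  | TBase i => TBase i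
  | TArr A1 A2 => TArr (shift c A1) (shift c A2)
  | TAll K B => TAll K (shift (S c) B)
  | TRec r => TRec (shift c r)
  | TVnt r => TVnt (shift c r)
  | TNil => TNil
  | TCons l A1 r => TCons l (shift c A1) (shift c r)
  end.

Fixpoint dyn_occurs (A : ty) : Prop :=
  match A with
  | TDyn => True
  | TArr A1 A2 => dyn_occurs A1 \/ dyn_occurs A2
  | TAll _ B => dyn_occurs B
  | TRec r | TVnt r => dyn_occurs r
  | TCons _ A1 r => dyn_occurs A1 \/ dyn_occurs r
  | _ => False
  end.

Definition QPoly (A : ty) : Prop :=
  (forall K B, A <> TAll K B) /\ dyn_occurs A.

Inductive rmatch : ty -> nat -> ty -> ty -> Prop :=
  | rm_head : forall l A r, rmatch (TCons l A r) l A r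
  | rm_skip : forall l l' A B r r',
      l' <> l -> rmatch r l A r' -> rmatch (TCons l' B r) l A (TCons l' B r')
  | rm_dyn : forall l, rmatch TDyn l TDyn TDyn.

Inductive tequiv : ty -> ty -> Prop :=
  | eq_refl : forall A, tequiv A A
  | eq_sym : forall A B, tequiv A B -> tequiv B A
  | eq_trans : forall A B C, tequiv A B -> tequiv B C -> tequiv A C
  | eq_arr : forall A1 A2 B1 B2,
      tequiv A1 B1 -> tequiv A2 B2 -> tequiv (TArr A1 A2) (TArr B1 B2)
  | eq_all : forall K A B, tequiv A B -> tequiv (TAll K A) (TAll K B)
  | eq_rec : forall r1 r2, tequiv r1 r2 -> tequiv (TRec r1) (TRec r2)
  | eq_vnt : forall r1 r2, tequiv r1 r2 -> tequiv (TVnt r1) (TVnt r2)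
  | eq_cons : forall l A B r1 r2,
      tequiv A B -> tequiv r1 r2 -> tequiv (TCons l A r1) (TCons l B r2)
  | eq_swap : forall l l' A B r,
      l <> l' -> tequiv (TCons l A (TCons l' B r)) (TCons l' B (TCons l A r)).

Inductive consistent : ty -> ty -> Prop :=
  | c_refl : forall A, consistent A A
  | c_dynL : forall A, consistent TDyn A
  | c_dynR : forall A, consistent A TDyn
  | c_arr : forall A1 A2 B1 B2,
      consistent A1 B1 -> consistent A2 B2 ->
      consistent (TArr A1 A2) (TArr B1 B2)
  | c_all : forall K A B, consistent A B -> consistent (TAll K A) (TAll K B)
  (* forall X:K.A ~ B  if QPoly B, X notin ftv(B), A ~ B  (B weakened under X) *)
  | c_allL : forall K A B,
      QPoly B -> consistent A (shift 0 B) -> consistent (TAll K A) B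
  | c_allR : forall K A B,
      QPoly A -> consistent (shift 0 A) B -> consistent A (TAll K B)
  | c_rec : forall r1 r2, consistent r1 r2 -> consistent (TRec r1) (TRec r2)
  | c_vnt : forall r1 r2, consistent r1 r2 -> consistent (TVnt r1) (TVnt r2)
  | c_consL : forall l A r1 B B' r2,
      rmatch B l B' r2 -> consistent A B' -> consistent r1 r2 ->
      consistent (TCons l A r1) B
  | c_consR : forall l A A' r1 B r2,
      rmatch A l A' r1 -> consistent A' B -> consistent r1 r2 ->
      consistent A (TCons l B r2).

(* Main.v *)
Require Import Defs.
From Stdlib Require Import Arith Lia.

Inductive step : ty -> ty -> Prop :=
  | s_swap : forall l l' A B r, l <> l' ->
      step (TCons l A (TCons l' B r)) (TCons l' B (TCons l A r))
  | s_arrL : forall A A' B, step A A' -> step (TArr A B) (TArr A' B)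
  | s_arrR : forall A B B', step B B' -> step (TArr A B) (TArr A B')
  | s_all : forall K A A', step A A' -> step (TAll K A) (TAll K A')
  | s_rec : forall A A', step A A' -> step (TRec A) (TRec A')
  | s_vnt : forall A A', step A A' -> step (TVnt A) (TVnt A')
  | s_consH : forall l A A' r, step A A' -> step (TCons l A r) (TCons l A' r)
  | s_consT : forall l A r r', step r r' -> step (TCons l A r) (TCons l A r').

Inductive star : ty -> ty -> Prop :=
  | st_refl : forall A, star A A
  | st_step : forall A B C, step A B -> star B C -> star A C.

Lemma step_sym : forall A B, step A B -> step B A.
Proof. induction 1; constructor; auto. Qed.

Lemma star_trans : forall A B C, star A B -> star B C -> star A C.
Proof. induction 1; intros; auto. econstructor; eauto. Qed.

Lemma star_sym : forall A B, star A B -> star B A.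
Proof.
  induction 1. constructor.
  apply star_trans with B; auto. econstructor. apply step_sym; eauto. constructor.
Qed.

Lemma star_map : forall f, (forall x y, step x y -> step (f x) (f y)) ->
  forall x y, star x y -> star (f x) (f y).
Proof. intros f Hf. induction 1. constructor. econstructor; eauto. Qed.

Lemma tequiv_star : forall A B, tequiv A B -> star A B.
Proof.
  induction 1.
  - constructor.
  - apply star_sym; auto.
  - eapply star_trans; eauto.
  - apply star_trans with (TArr B1 A2).
    apply (star_map (fun x => TArr x A2)); auto; intros; constructor; auto.
    apply (star_map (fun x => TArr B1 x)); auto; intros; constructor; auto.
  - apply (star_map (fun x => TAll K x)); auto; intros; constructor; auto.
  - apply (star_map (fun x => TRec x)); auto; intros; constructor; auto.
  - apply (star_map (fun x => TVnt x)); auto; intros; constructor; auto.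
  - apply star_trans with (TCons l B r1).
    apply (star_map (fun x => TCons l x r1)); auto; intros; constructor; auto.
    apply (star_map (fun x => TCons l B x)); auto; intros; constructor; auto.
  - econstructor. constructor; auto. constructor.
Qed.

Lemma step_cons : forall A B, step A B -> consistent A B.
Proof.
  induction 1.
  - eapply c_consR. apply rm_skip. auto. apply rm_head. apply c_refl. apply c_refl.
  - constructor; auto. apply c_refl.
  - constructor; auto. apply c_refl.
  - constructor; auto.
  - constructor; auto.
  - constructor; auto.
  - eapply c_consR. apply rm_head. auto. apply c_refl.
  - eapply c_consR. apply rm_head. apply c_refl. auto.
Qed.

Lemma shift_step : forall A B, step A B -> forall c, step (shift c A) (shift c B).
Proof. induction 1; intros; simpl; constructor; auto. Qed.

Lemma dyn_step : forall A B, step A B -> dyn_occurs A -> dyn_occurs B.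
Proof. induction 1; simpl; tauto. Qed.

Lemma qpoly_step : forall A B, step A B -> QPoly A -> QPoly B.
Proof.
  intros A B H [H1 H2]. split.
  - intros K D E. subst. inversion H; subst. eapply H1; eauto.
  - eapply dyn_step; eauto.
Qed.

Lemma match_step : forall B l B' r2, rmatch B l B' r2 -> forall C, step B C ->
  exists C' r2', rmatch C l C' r2' /\ (B' = C' \/ step B' C') /\ (r2 = r2' \/ step r2 r2').
Proof.
  induction 1; intros C HS.
  - inversion HS; subst.
    + exists A, (TCons l' B r0). split. apply rm_skip; auto. apply rm_head. auto.
    + exists A', r. split. apply rm_head. auto.
    + exists A, r'. split. apply rm_head. auto.
  - inversion HS; subst.
    + match goal with H : rmatch (TCons _ _ _) _ _ _ |- _ => inversion H; subst end.
      * do 2 eexists. split. apply rm_head. auto.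
      * do 2 eexists. split. apply rm_skip; [auto| apply rm_skip; eauto].
        split; auto. right. constructor. auto.
    + do 2 eexists. split. apply rm_skip; eauto.
      split; auto. right. constructor. auto.
    + match goal with H : step _ _ |- _ => destruct (IHrmatch _ H) as [C' [r2' [Hm [E1 E2]]]] end.
      exists C', (TCons l' B r2'). split. apply rm_skip; auto.
      split; auto. destruct E2; [left; subst; auto | right; constructor; auto].
  - inversion HS.
Qed.

Lemma match_comm : forall X l P Q, rmatch X l P Q -> forall a Z r4, a <> l ->
  rmatch Q a Z r4 -> exists r5, rmatch X a Z r5 /\ rmatch r5 l P r4.
Proof.
  induction 1; intros a Z r4 Ha Hm.
  - exists (TCons l A r4). split. apply rm_skip; auto. apply rm_head.
  - inversion Hm; subst.
    + exists r. split. apply rm_head. auto.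
    + destruct (IHrmatch _ _ _ Ha H8) as [r5 [H1 H2]].
      exists (TCons l' B r5). split; apply rm_skip; auto.
  - inversion Hm; subst. exists TDyn. split; constructor.
Qed.

Fixpoint tsize (A : ty) : nat :=
  match A with
  | TArr a b => S (tsize a + tsize b)
  | TAll _ b => S (tsize b)
  | TRec r | TVnt r => S (tsize r)
  | TCons _ a r => S (tsize a + tsize r)
  | _ => 1
  end.

Lemma match_size : forall X l P Q, rmatch X l P Q -> tsize Q <= tsize X.
Proof. induction 1; simpl; lia. Qed.

Lemma rowR : forall n A C, tsize A + tsize C < n ->
  forall l A' r1 C' r3, rmatch A l A' r1 -> rmatch C l C' r3 ->
  consistent A' C' -> consistent r1 r3 -> consistent A C.
Proof.
  induction n; intros A C Hs l A' r1 C' r3 HA HC H1 H2. lia.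
  inversion HA; subst.
  - eapply c_consL; eauto.
  - inversion HC; subst.
    + eapply c_consR; eauto.
    + rename l' into a, B into Z, r into ra, r' into ra', l'0 into c, B0 into W,
        r0 into rc, r'0 into rc'.
      simpl in Hs.
      inversion H2; subst.
      * eapply c_consL. apply rm_head. apply c_refl.
        apply IHn with (A := ra) (C := rc) (l := l) (A' := A') (C' := C') (r1 := rc') (r3 := rc'); try eassumption; try apply c_refl; simpl; lia.
      * destruct (match_comm _ _ _ _ HC _ _ _ H H8) as [r5 [Hm1 Hm2]].
        eapply c_consL. exact Hm1. auto.
        pose proof (match_size _ _ _ _ Hm1). simpl in *.
        apply IHn with (A := ra) (C := r5) (l := l) (A' := A') (C' := C') (r1 := ra') (r3 := r2); auto; simpl in *; lia.
      * match goal with Hx : rmatch (TCons a Z ra') c _ _ |- _ =>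
          destruct (match_comm _ _ _ _ HA _ _ _ H3 Hx) as [r6 [Hm1 Hm2]] end.
        eapply c_consR. exact Hm1. auto.
        pose proof (match_size _ _ _ _ Hm1). simpl in *.
        eapply IHn with (A := r6) (C := rc) (l := l); eauto; simpl in *; lia.
    + apply c_dynR.
  - apply c_dynL.
Qed.

Lemma main_step : forall A B, consistent A B -> forall C, step B C -> consistent A C.
Proof.
  induction 1; intros C HS.
  - apply step_cons; auto.
  - apply c_dynL.
  - inversion HS.
  - inversion HS; subst; apply c_arr; auto.
  - inversion HS; subst; apply c_all; auto.
  - apply c_allL. eapply qpoly_step; eauto. apply IHconsistent. apply shift_step; auto.
  - inversion HS; subst. apply c_allR; auto.
  - inversion HS; subst; apply c_rec; auto.
  - inversion HS; subst; apply c_vnt; auto.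
  - destruct (match_step _ _ _ _ H _ HS) as [C' [r2' [Hm [E1 E2]]]].
    eapply c_consL. eauto.
    destruct E1; [subst; auto | auto].
    destruct E2; [subst; auto | auto].
  - inversion HS; subst.
    + eapply rowR with (l := l). eauto. eauto.
      apply rm_skip; auto. apply rm_head. eauto. eauto.
    + eapply c_consR; eauto.
    + eapply c_consR; eauto.
Qed.

Theorem mainTheorem4 : forall A B C : ty,
  consistent A B -> tequiv B C -> consistent A C.
Proof.
  intros A B C H HE. apply tequiv_star in HE.
  revert A H. induction HE; intros; auto.
  apply IHHE. eapply main_step; eauto.
Qed.
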